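(* Let $d\geq 3$ and $n\geq d+1$ be integers. Then $\mathcal{F}(C_d(n))$ is $2$-colorable. Moreover, $\tau(\mathcal{F}(C_d(n)))=\left\lceil\frac{n-d}{2}\right\rceil+1$ if $d$ is even, and $\tau(\mathcal{F}(C_d(n)))=2$ if $d$ is odd.
   Context: $C_d(n)$ is the cyclic $d$-polytope on $n$ vertices, the convex hull of $n$ distinct points on the moment curve $t\mapsto(t,t^2,\dots,t^d)$ in $\mathbb{R}^d$, with vertices labelled $1,\dots,n$ in increasing order of parameter. It is simplicial, and its facet hypergraph $\mathcal{F}(C_d(n))$ consists exactly of the $d$-subsets $f\subseteq[n]$ such that for all $i<j$ with $i,j\notin f$, the set $\{k\in f: i<k<j\}$ has even size (Gale's evenness criterion). $2$-colorable means the vertices can be $2$-colored with no monochromatic hyperedge; $\tau$ is the minimum size of a vertex set meeting every hyperedge. *)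

(* Defs.v *)
From mathcomp Require Import all_boot.
Set Implicit Arguments. Unset Strict Implicit. Unset Printing Implicit Defensive.

(* Vertices of C_d(n) are labelled by 'I_n (i.e. 0..n-1, in increasing order
   of the moment-curve parameter; the paper's labels 1..n shifted by one). *)

Definition gale_even (n : nat) (f : {set 'I_n}) : bool :=
  [forall i : 'I_n, forall j : 'I_n,
     ((i < j)%N && (i \notin f) && (j \notin f)) ==>
       ~~ odd #|[set k in f | (i < k < j)%N]| ].

Definition cyclic_facets (d n : nat) : {set {set 'I_n}} :=
  [set f : {set 'I_n} | (#|f| == d) && gale_even f].

Definition two_colorable (T : finType) (H : {set {set T}}) : Prop :=
  exists c : T -> bool, forall e, e \in H ->
    exists x, exists y, [/\ x \in e, y \in e & c x != c y].

Definition transversal (T : finType) (H : {set {set T}}) (S : {set T}) : bool :=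
  [forall e in H, ~~ [disjoint S & e]].

Definition is_tau (T : finType) (H : {set {set T}}) (t : nat) : Prop :=
  (exists S : {set T}, transversal H S /\ #|S| = t) /\
  (forall S : {set T}, transversal H S -> (t <= #|S|)%N).

(* Main.v *)
Require Import Defs.
From mathcomp Require Import all_boot.
From mathcomp Require Import zify.
Set Implicit Arguments. Unset Strict Implicit. Unset Printing Implicit Defensive.


Definition pre (q : nat -> bool) z := \sum_(0 <= i < z) (q i : nat).

Lemma sum_eq1 (c z : nat) : \sum_(0<=i<z) ((i == c) : nat) = (c < z).
Proof.
elim: z => [|z IH]; first by rewrite big_geq //.
rewrite big_nat_recr //= IH.
case: (ltngtP c z) => h; rewrite ltnS.
- by rewrite ltnW.
- by rewrite leqNgt h.
- by rewrite h leqnn.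
Qed.

Lemma sum_lt x z : \sum_(0<=i<z) ((i < x) : nat) = minn x z.
Proof.
elim: z => [|z IH]; first by rewrite big_geq // minn0.
rewrite big_nat_recr //= IH.
case: (ltnP z x) => h /=; lia.
Qed.

Lemma sum_ge y z : \sum_(0<=i<z) ((y <= i) : nat) = z - y.
Proof.
elim: z => [|z IH]; first by rewrite big_geq //.
rewrite big_nat_recr //= IH.
case: (leqP y z) => h /=; lia.
Qed.

Lemma card_pred n (p : nat -> bool) : #|[set x : 'I_n | p x]| = \sum_(0<=i<n) p i.
Proof.
rewrite -sum1_card big_mkcond /= big_mkord.
by apply: eq_bigr => i _; rewrite inE; case: (p i).
Qed.

Lemma evens m : \sum_(0<=i<m.*2) (~~ odd i : nat) = m.
Proof.
elim: m => [|m IH]; first by rewrite big_geq //.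
rewrite doubleS !big_nat_recr //= IH odd_double /=.
by rewrite addn0 addn1.
Qed.

Lemma sum_split (F : nat -> nat) a b c : a <= b -> b <= c ->
  \sum_(a<=i<c) F i = \sum_(a<=i<b) F i + \sum_(b<=i<c) F i.
Proof. by move=> h1 h2; rewrite (big_cat_nat h1 h2). Qed.

Lemma sum0 (F : nat -> nat) a b : (forall i, a <= i < b -> F i = 0) -> \sum_(a<=i<b) F i = 0.
Proof. by move=> h; rewrite (eq_big_nat _ _ h) big1. Qed.

Lemma sum_and_lt n N (P : nat -> bool) :
  \sum_(0<=i<n) ((P i && (i < N)) : nat) <= \sum_(0<=i<N) (P i : nat).
Proof.
case: (leqP n N) => h.
- rewrite (sum_split (fun i => P i : nat) (leq0n n) h).
  rewrite (@eq_big_nat _ _ _ 0 n _ (fun i => P i : nat)); first by rewrite leq_addr.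
  by move=> i /andP [_ hi]; rewrite (leq_trans hi h) andbT.
- rewrite (sum_split _ (leq0n N) (ltnW h)).
  rewrite (sum0 (a:=N)); last by move=> i /andP [hi _]; rewrite ltnNge hi andbF.
  by rewrite addn0; apply: leq_sum => i _; case: (P i); case: (i < N).
Qed.


Lemma gale_pred n (q : nat -> bool) c :
  (forall z, z < n -> ~~ q z -> odd (pre q z) = c) -> gale_even [set x : 'I_n | q x].
Proof.
move=> H; apply/forallP => i; apply/forallP => j; apply/implyP => /andP [/andP [hij hi] hj].
rewrite inE in hi; rewrite inE in hj.
have -> : #|[set k in [set x : 'I_n | q x] | i < k < j]| =
          \sum_(0<=k<n) ((q k && (i < k < j)) : nat).
  by rewrite -card_pred; apply: eq_card => k; rewrite !inE.
have hjn : j <= n by apply: ltnW.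
rewrite (sum_split _ (leq0n i.+1) (leq_trans hij hjn)).
rewrite (sum0 (a:=0)); last by move=> k /andP [_ hk]; rewrite ltnNge -ltnS hk andbF.
rewrite add0n (sum_split _ hij hjn).
rewrite [X in _ + X](sum0 (a:=j)); last by move=> k /andP [hk _]; rewrite (leq_gtF hk) !andbF.
rewrite addn0.
rewrite (@eq_big_nat _ _ _ i.+1 j _ (fun k => q k : nat)); last first.
  by move=> k /andP [h1 h2]; rewrite h1 h2 /= andbT.
have E : pre q j = pre q i.+1 + \sum_(i.+1<=k<j) (q k : nat).
  by rewrite /pre (sum_split _ (leq0n i.+1) hij).
have E2 : pre q i.+1 = pre q i by rewrite /pre big_nat_recr //= (negbTE hi) addn0.
move: E; rewrite E2 => E.
have h1 := H i (ltn_ord i) hi; have h2 := H j (ltn_ord j) hj.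
rewrite E oddD h1 in h2.
clear H h1; by move: h2; case: c; case: (odd _).
Qed.

Lemma facet_con n x y (P : nat -> bool) : x <= y -> y <= n ->
  (forall i, P i -> x <= i < y) -> (forall z, ~~ P z -> ~~ odd (pre P z)) ->
  gale_even [set z : 'I_n | (z < x) || P z || (y <= z)] /\
  #|[set z : 'I_n | (z < x) || P z || (y <= z)]| = x + pre P n + (n - y).
Proof.
move=> hxy hyn hP hE.
have hsplit : forall z, (((z < x) || P z || (y <= z)) : nat) = (z < x) + P z + (y <= z).
  move=> z; case hz: (P z); first by have := hP z hz => /andP [h1 h2]; rewrite ltnNge h1 leqNgt h2.
  by rewrite orbF addn0; case: (ltnP z x) => h1 //=; rewrite leqNgt (leq_trans h1 hxy).
have sumE : forall z, pre (fun z => (z < x) || P z || (y <= z)) z = minn x z + pre P z + (z - y).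
  move=> z; rewrite /pre (eq_bigr (fun i => (i < x) + P i + (y <= i))); last by move=> i _; apply: hsplit.
  by rewrite !big_split /= sum_lt sum_ge.
split.
- apply: (@gale_pred n (fun z => (z < x) || P z || (y <= z)) (odd x)) => z hz hq.
  rewrite sumE.
  move: hq; rewrite !negb_or -leqNgt -ltnNge => /andP [/andP [h1 h2] h3].
  have -> : minn x z = x by apply/minn_idPl.
  have -> : z - y = 0 by apply/eqP; rewrite subn_eq0 ltnW.
  by rewrite addn0 oddD (negbTE (hE z h2)) addbF.
- rewrite (card_pred n (fun z => (z < x) || P z || (y <= z))).
  have := sumE n; rewrite /pre => ->.
  by have -> : minn x n = x by apply/minn_idPl; apply: leq_trans hxy hyn.
Qed.


Definition PLres (s : nat -> bool) lo e k (p : nat -> bool) :=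
  [/\ forall i, p i -> lo <= i < e, forall i, p i -> ~~ s i,
     forall z, e <= z -> pre p z = 2*k & forall z, ~~ p z -> ~~ odd (pre p z)].

Lemma PL (s : nat -> bool) M : forall m lo k, m < M ->
  2*k + 2 * \sum_(lo <= i < lo + m) (s i : nat) <= m ->
  exists p, PLres s lo (lo + m) k p.
Proof.
elim: M => [|M IH] m lo k //.
move=> hm h.
case: k h => [|k] h.
  exists (fun _ => false); split => //.
  - by move=> z _; rewrite /pre sum0.
  - by move=> z _; rewrite /pre sum0.
case: m hm h => [|[|m]] hm h; try by move: h; lia.
have e2 : lo.+2 + m = lo + m.+2 by lia.
have e1 : lo.+1 + m.+1 = lo + m.+2 by lia.
rewrite big_ltn ?(big_ltn (m := lo.+1)) in h; try lia.
case hs0: (s lo) h => h.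
- have hb : 2 * k.+1 + 2 * \sum_(lo.+1 <= i < lo.+1 + m.+1) (s i : nat) <= m.+1.
    rewrite e1 big_ltn; last by lia.
    lia.
  have [p [p1 p2 p3 p4]] := IH m.+1 lo.+1 k.+1 (ltac:(lia) : m.+1 < M) hb.
  exists p; rewrite -e1; split => // i /p1; lia.
case hs1: (s lo.+1) h => h.
- have hb : 2 * k.+1 + 2 * \sum_(lo.+2 <= i < lo.+2 + m) (s i : nat) <= m.
    rewrite e2; lia.
  have [p [p1 p2 p3 p4]] := IH m lo.+2 k.+1 (ltn_trans (ltnSn _) (ltac:(lia) : m.+1 < M)) hb.
  exists p; rewrite -e2; split => // i /p1; lia.
have hb : 2 * k + 2 * \sum_(lo.+2 <= i < lo.+2 + m) (s i : nat) <= m.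
  rewrite e2; lia.
have [p [p1 p2 p3 p4]] := IH m lo.+2 k (ltn_trans (ltnSn _) (ltac:(lia) : m.+1 < M)) hb.
rewrite -e2.
exists (fun i => (i == lo) || (i == lo.+1) || p i).
have hsp : forall i, (((i == lo) || (i == lo.+1) || p i) : nat) = (i == lo) + (i == lo.+1) + p i.
  move=> i; case hi: (p i).
  + have /andP [a b] := p1 i hi.
    by rewrite orbT (gtn_eqF (ltnW a)) (gtn_eqF a).
  + rewrite orbF addn0; case: (i == lo) / eqP => [->|_].
    * by rewrite (ltn_eqF (ltnSn lo)).
    * by case: (i == lo.+1).
have preE : forall z, pre (fun i => (i == lo) || (i == lo.+1) || p i) z = (lo < z) + (lo.+1 < z) + pre p z.
  move=> z; rewrite /pre (eq_bigr (fun i => (i == lo) + (i == lo.+1) + p i)); last by move=> i _; apply: hsp.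
  by rewrite !big_split /= !sum_eq1.
split.
- move=> i /orP [/orP [/eqP->|/eqP->]|/p1]; lia.
- move=> i /orP [/orP [/eqP->|/eqP->]|/p2] //; by rewrite ?hs0 ?hs1.
- move=> z hz; have hz2 : lo.+2 + m <= z by lia.
  rewrite preE (p3 z hz2).
  have -> : lo < z by lia.
  have -> : lo.+1 < z by lia.
  lia.
- move=> z; rewrite preE !negb_or => /andP [/andP [a b] c].
  have -> : (lo.+1 < z) = (lo < z).
    by move: a b; rewrite !neq_ltn; case: (ltngtP lo z) => //; lia.
  by rewrite addnn oddD odd_double (negbTE (p4 z c)).
Qed.


Definition inS n (S : {set 'I_n}) (k : nat) : bool := [exists x in S, nat_of_ord x == k].

Lemma inS_ord n (S : {set 'I_n}) (x : 'I_n) : inS S x = (x \in S).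
Proof.
apply/existsP/idP => [[y /andP [yS /eqP e]]|xS]; last by exists x; rewrite xS eqxx.
by rewrite -(val_inj e).
Qed.

Lemma inS_lt n (S : {set 'I_n}) k : inS S k -> k < n.
Proof. by case/existsP => y /andP [_ /eqP <-]. Qed.

Lemma card_inS n (S : {set 'I_n}) : #|S| = pre (inS S) n.
Proof.
rewrite /pre -card_pred; apply: eq_card => x; by rewrite inE inS_ord.
Qed.

Lemma PL' (s : nat -> bool) lo e k : lo <= e -> 2*k + 2*\sum_(lo<=i<e) (s i : nat) <= e - lo ->
  exists p, PLres s lo e k p.
Proof.
move=> h hb; have := @PL s (e - lo).+1 (e - lo) lo k (ltnSn _).
by rewrite subnKC //; apply.
Qed.

Lemma evenE m : ~~ odd m -> exists t, m = 2 * t.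
Proof.
move=> h; exists m./2; by rewrite -{1}(odd_double_half m) (negbTE h) add0n -mul2n.
Qed.

Lemma oddE m : odd m -> exists t, m = 2 * t + 1.
Proof.
move=> h; exists m./2; by rewrite -{1}(odd_double_half m) h -mul2n addnC.
Qed.

Lemma mk (d n : nat) (S : {set 'I_n}) (x y : nat) (P : nat -> bool) : x <= y -> y <= n -> (forall i, P i -> x <= i < y) ->
  (forall z, ~~ P z -> ~~ odd (pre P z)) -> x + pre P n + (n - y) = d ->
  (forall i, i < n -> (i < x) || P i || (y <= i) -> ~~ inS S i) ->
  exists e, e \in cyclic_facets d n /\ [disjoint S & e].
Proof.
move=> hxy hyn hP hE hd hav.
have [hg hc] := facet_con (n:=n) hxy hyn hP hE.
exists [set z : 'I_n | (z < x) || P z || (y <= z)]; split.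
- by rewrite inE hc hd eqxx hg.
- rewrite disjoints_subset; apply/subsetP => z zS; rewrite !inE; apply/negP => hq.
  by have := hav z (ltn_ord z) hq; rewrite inS_ord zS.
Qed.

Lemma pre_false n : pre (fun _ => false) n = 0.
Proof. by rewrite /pre sum0. Qed.


Lemma LB (d n : nat) (S : {set 'I_n}) : d < n ->
  (#|S| <= 1 \/ (~~ odd d /\ d + 2 * #|S| <= n.+1)) ->
  exists e, e \in cyclic_facets d n /\ [disjoint S & e].
Proof.
move=> hdn hS.
set s := inS S.
have pF := pre_false.
case: (set_0Vmem S) => [S0 | [v vS]].
  apply: (@mk d n S d n (fun _ => false)).
  - lia.
  - lia.
  - by move=> i.
  - by move=> z _; rewrite pF.
  - by rewrite pF; lia.
  - by move=> i _ _; apply/existsP => [[x]]; rewrite S0 inE.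
have exP : exists k, s k by exists (val v); rewrite /s inS_ord.
have ub : forall k, s k -> k <= n by move=> k /inS_lt /ltnW.
case: (ex_minnP exP) => a sa amin.
case: (ex_maxnP exP ub) => b sb bmax.
have bn : b < n := inS_lt sb.
have ab : a <= b := amin b sb.
have belowa : forall i, i < a -> ~~ s i.
  by move=> i hi; apply/negP => /amin; rewrite leqNgt hi.
have aboveb : forall i, b < i -> ~~ s i.
  by move=> i hi; apply/negP => /bmax; rewrite leqNgt hi.
case: (leqP d (a + (n - b.+1))) => hA.
  apply: (@mk d n S (minn a d) (n - d + minn a d) (fun _ => false)).
  - lia.
  - lia.
  - by move=> i.
  - by move=> z _; rewrite pF.
  - by rewrite pF; lia.
  - move=> i hi /orP [/orP [h|//]|h].
    + by apply: belowa; lia.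
    + by apply: aboveb; lia.
have hB : ~~ odd d /\ d + 2 * #|S| <= n.+1.
  case: hS => // h1; exfalso.
  have ab' : a = b.
    apply/eqP; apply/negPn/negP => nab.
    move: sa sb; rewrite /s => /existsP [oa /andP [oaS /eqP ea]] /existsP [ob /andP [obS /eqP eb]].
    have : [set oa; ob] \subset S by apply/subsetP => z; rewrite !inE => /orP [/eqP->|/eqP->].
    move/subset_leq_card; rewrite cards2.
    have -> : oa != ob by apply/negP => /eqP e; move: nab; rewrite -ea -eb e eqxx.
    lia.
  lia.
case: hB => de hc.
have cE : #|S| = pre s n by rewrite card_inS.
have s0a : \sum_(0 <= i < a) (s i : nat) = 0.
  by apply: sum0 => i /andP [_ hi]; rewrite (negbTE (belowa i hi)).
have s0b : \sum_(b.+1 <= i < n) (s i : nat) = 0.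
  by apply: sum0 => i /andP [hi _]; rewrite (negbTE (aboveb i hi)).
have [d2 hd2] := evenE de.
case: (boolP (odd a)) => pa.
- case: (boolP (odd (n - b.+1))) => pb.
  +
    have [a2 ha2] := oddE pa.
    have [b2 hb2] := oddE pb.
    have ltab : a < b by lia.
    have T3 : \sum_(a.+1 <= i < b) (s i : nat) + 2 = #|S|.
      rewrite cE /pre (sum_split _ (leq0n a) (ltnW (leq_ltn_trans ab bn))) s0a add0n.
      rewrite [RHS]big_ltn ?(leq_ltn_trans ab bn) // (_ : s a = true) //.
      rewrite [in RHS](sum_split _ ltab (ltnW bn)) [in RHS](big_ltn bn) (_ : s b = true) // s0b; lia.
    have [|p [p1 p2 p3 p4]] := @PL' s a.+1 b (d2 - a2 - b2 - 1) ltab.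
      lia.
    apply: (@mk d n S a b.+1 p).
    * lia.
    * lia.
    * by move=> i /p1; lia.
    * exact: p4.
    * rewrite p3; lia.
    * move=> i hi /orP [/orP [h|h]|h].
      - by apply: belowa.
      - by apply: p2.
      - by apply: aboveb.
  +
    have [b2 hb2] := evenE pb.
    have T2 : \sum_(0 <= i < b) (s i : nat) + 1 = #|S|.
      rewrite cE /pre (sum_split _ (leq0n b) (ltnW bn)) (big_ltn bn) sb s0b; lia.
    have [|p [p1 p2 p3 p4]] := @PL' s 0 b (d2 - b2) (leq0n b).
      lia.
    apply: (@mk d n S 0 b.+1 p).
    * lia.
    * lia.
    * by move=> i /p1; lia.
    * exact: p4.
    * rewrite p3; lia.
    * move=> i hi /orP [/orP [h|h]|h] //.
      - by apply: p2.
      - by apply: aboveb.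
-
  have [a2 ha2] := evenE pa.
  have T1 : \sum_(a.+1 <= i < n) (s i : nat) + 1 = #|S|.
    rewrite cE /pre (sum_split _ (leq0n a) (ltnW (leq_ltn_trans ab bn))) s0a add0n.
    rewrite [RHS]big_ltn ?(leq_ltn_trans ab bn) // (_ : s a = true) //; lia.
  have [|p [p1 p2 p3 p4]] := @PL' s a.+1 n (d2 - a2) (leq_ltn_trans ab bn).
    lia.
  apply: (@mk d n S a n p).
  * lia.
  * lia.
  * by move=> i /p1; lia.
  * exact: p4.
  * rewrite p3; lia.
  * move=> i hi /orP [/orP [h|h]|h].
    - by apply: belowa.
    - by apply: p2.
    - lia.
Qed.


Lemma gale_isolated n (e : {set 'I_n.+1}) (b : nat) :
  gale_even e -> 0 < b -> b < n -> inord b \in e ->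
  inord b.-1 \notin e -> inord b.+1 \notin e -> False.
Proof.
move=> hg b0 bn be bm bp.
have hb : b < n.+1 by lia.
have hbm : b.-1 < n.+1 by lia.
have hbp : b.+1 < n.+1 by lia.
move/forallP: hg => /(_ (inord b.-1)) /forallP /(_ (inord b.+1)) /implyP.
rewrite !inordK // bm bp andbT.
have -> : [set k in e | b.-1 < k < b.+1] = [set inord b].
  apply/setP => k; rewrite !inE.
  case: (k =P inord b) => [->|nk]; first by rewrite be inordK //; lia.
  case: (ltnP b.-1 k) => h1 //=; case: (ltnP k b.+1) => h2 /=; rewrite ?andbF //.
  exfalso; apply: nk; apply: val_inj; rewrite /= inordK //; lia.
rewrite cards1 /=; lia.
Qed.

Lemma colorable d n : 3 <= d -> two_colorable (cyclic_facets d n.+1).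
Proof.
move=> hd; exists (fun x : 'I_n.+1 => odd x) => e; rewrite inE => /andP [/eqP ce hg].
have [x0 x0e] : exists x, x \in e by apply/card_gt0P; lia.
case: (arg_minnP (fun x : 'I_n.+1 => val x) x0e) => a ae amin.
case: (arg_maxnP (fun x : 'I_n.+1 => val x) x0e) => c ce' cmax.
have : 0 < #|e :\ a :\ c|.
  have := cardsD1 a e; have := cardsD1 c (e :\ a); rewrite (_ : a \in e = true) //.
  set X := #|e :\ a :\ c|; case: (c \in e :\ a) => /= -> ; rewrite ce; lia.
case/card_gt0P => b; rewrite !inE => /andP [bc /andP [ba be]].
have ab : a < b.
  rewrite ltn_neqAle amin // andbT; apply/eqP => h; move: ba; by rewrite (val_inj h) eqxx.
have bc' : b < c.
  have hcb : (b <= c)%N := cmax b be.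
  rewrite ltn_neqAle hcb andbT; apply/eqP => h; move: bc; by rewrite (val_inj h) eqxx.
have cn : c < n.+1 := ltn_ord c.
have bn1 : b < n.+1 := ltn_ord b.
have Eb : inord (nat_of_ord b) = b by apply: val_inj; rewrite /= inordK.
case hm: (inord (nat_of_ord b).-1 \in e).
  exists (inord (nat_of_ord b).-1), b; split => //; rewrite inordK; last by lia.
  by case: (nat_of_ord b) ab => //= k _; case: (odd k).
case hp: (inord (nat_of_ord b).+1 \in e).
  exists b, (inord (nat_of_ord b).+1); split => //; rewrite inordK; last by lia.
  by rewrite /=; case: (odd b).
exfalso; apply: (@gale_isolated n e b).
- exact: hg.
- lia.
- lia.
- by rewrite Eb.
- by rewrite hm.
- by rewrite hp.
Qed.


Lemma not_trans d n (S : {set 'I_n}) e : e \in cyclic_facets d n -> [disjoint S & e] ->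
  Defs.transversal (cyclic_facets d n) S -> False.
Proof. by move=> eF dj /forallP /(_ e); rewrite eF dj. Qed.

Lemma odd_trans d n : odd d -> 0 < n -> Defs.transversal (cyclic_facets d n.+1) [set ord0; ord_max].
Proof.
move=> od n0; apply/forallP => e; apply/implyP; rewrite inE => /andP [/eqP ce hg].
apply/negP; rewrite disjoints_subset => /subsetP hs.
have h0 : ord0 \notin e by have := hs ord0; rewrite !inE eqxx => /(_ isT).
have h1 : ord_max \notin e by have := hs ord_max; rewrite !inE eqxx orbT => /(_ isT).
move/forallP: hg => /(_ ord0) /forallP /(_ ord_max) /implyP.
rewrite h0 h1 /= n0 => /(_ isT).
have -> : [set k in e | 0 < k < n] = e.
  apply/setP => k; rewrite !inE; case ke: (k \in e) => //=.
  have k0 : k != ord0 by apply: contraNneq h0 => <-.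
  have kn : k != ord_max by apply: contraNneq h1 => <-.
  have := ltn_ord k; move: k0 kn; rewrite -!(inj_eq val_inj) /=; lia.
by rewrite ce od.
Qed.

Lemma even_trans d n s : 3 <= d -> n.+1 - d + 2 <= 2 * s -> 2 * s <= n.+1 ->
  Defs.transversal (cyclic_facets d n.+1) [set x : 'I_n.+1 | ~~ odd x && (x < 2 * s)].
Proof.
move=> hd h1 h2; apply/forallP => e; apply/implyP; rewrite inE => /andP [/eqP ce hg].
apply/negP; rewrite disjoints_subset => /subsetP hs.
have notin : forall k, k < n.+1 -> ~~ odd k -> k < 2 * s -> inord k \notin e.
  move=> k kn ek ks; have := hs (inord k); rewrite !inE inordK // ek ks; by move/(_ isT).
have low : forall k : 'I_n.+1, k \in e -> 2 * s - 1 <= k.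
  move=> k ke; rewrite leqNgt; apply/negP => kl.
  have kn := ltn_ord k.
  case: (boolP (odd k)) => ok.
  - have k0 : 0 < k by case: (nat_of_ord k) ok.
    apply: (@gale_isolated n e k).
    + exact: hg.
    + exact: k0.
    + lia.
    + by rewrite inord_val.
    + apply: notin.
      * lia.
      * by case: (nat_of_ord k) ok => //= k' h; exact: h.
      * lia.
    + apply: notin.
      * lia.
      * by rewrite /= negbK.
      * lia.
  - have hk : k < 2 * s by lia.
    by have := notin k kn ok hk; rewrite inord_val ke.
have : #|e| <= #|[set x : 'I_n.+1 | 2 * s - 1 <= x]|.
  by apply: subset_leq_card; apply/subsetP => x xe; rewrite inE low.
rewrite card_pred sum_ge ce; lia.
Qed.

Lemma card_even n s : #|[set x : 'I_n | ~~ odd x && (x < 2 * s)]| <= s.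
Proof.
rewrite (card_pred n (fun x => ~~ odd x && (x < 2 * s))).
apply: leq_trans (sum_and_lt _ _ _) _.
by rewrite mul2n evens.
Qed.


Unset Implicit Arguments.
Theorem proposition3p4 (d n : nat) :
  (3 <= d)%N -> (d + 1 <= n)%N ->
  two_colorable (cyclic_facets d n) /\
  (if ~~ odd d then is_tau (cyclic_facets d n) ((n - d).+1./2 + 1)
   else is_tau (cyclic_facets d n) 2).
Proof.
move=> hd hn; case: n hn => [|n] hn; first by lia.
split; first exact: colorable.
case: ifP => od.
- set h := (n.+1 - d).+1./2.
  have hh : 2 * h <= (n.+1 - d).+1 <= 2 * h + 1.
    rewrite /h; have := odd_double_half (n.+1 - d).+1; rewrite -mul2n.
    case: (odd _) => /= E; lia.
  have lower : forall S, Defs.transversal (cyclic_facets d n.+1) S -> h + 1 <= #|S|.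
    move=> S hT; rewrite leqNgt; apply/negP => lt.
    have hdn : d < n.+1 by lia.
    have hc : d + 2 * #|S| <= n.+2 by lia.
    have [e [eF dj]] := @LB d n.+1 S hdn (or_intror (conj od hc)).
    exact: not_trans eF dj hT.
  split; last exact: lower.
  have hT := @even_trans d n (h + 1) hd ltac:(lia) ltac:(lia).
  exists [set x : 'I_n.+1 | ~~ odd x && (x < 2 * (h + 1))]; split => //.
  by apply/eqP; rewrite eqn_leq card_even lower.
- move/negbFE: od => od.
  have lower : forall S, Defs.transversal (cyclic_facets d n.+1) S -> 2 <= #|S|.
    move=> S hT; rewrite leqNgt; apply/negP => lt.
    have hdn : d < n.+1 by lia.
    have hc : #|S| <= 1 by lia.
    have [e [eF dj]] := @LB d n.+1 S hdn (or_introl hc).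
    exact: not_trans eF dj hT.
  split; last exact: lower.
  have n0 : 0 < n by lia.
  exists [set ord0; ord_max]; split; first exact: odd_trans.
  have ne : (ord0 : 'I_n.+1) != ord_max.
    by apply/negP => /eqP /(congr1 val) /=; lia.
  by rewrite cards2 ne.
Qed.
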